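(* In the setting described in the context, there is a bound $\theta_{\max}$ which is $O(N^2)$ as a function of the number of channels $N$ such that, at every step $l$ of the projected subgradient updating performed within the DCDM algorithm, $\|\theta(\lambda^{(l)})\|_2\le\theta_{\max}$.
   Context: Setting: a source communicates with $K$ users through a single relay over $N$ channels. Given data: user weights $w_1,\dots,w_K\ge0$ with $\sum_kw_k=1$; nonnegative channel power gains $a_m$, $b_{nk}$, $c_{mk}$ ($1\le m,n\le N$, $1\le k\le K$); power limits $P_s,P_r,P_t>0$. Logarithms are base 2; $R_{mnk}(p^s,p^r)=\tfrac12\min\{\log(1+a_mp^s),\log(1+c_{mk}p^s+b_{nk}p^r)\}$. For $\lambda=(\lambda_s,\lambda_r,\lambda_t)\succeq0$ the dual function of the relaxed problem is $g(\lambda)=\max[\sum_{m,n,k}\frac{w_k}{2}\tilde\phi_{mnk}\min\{\log(1+a_mP^s_{mnk}/\tilde\phi_{mnk}),\log(1+c_{mk}P^s_{mnk}/\tilde\phi_{mnk}+b_{nk}P^r_{mnk}/\tilde\phi_{mnk})\}-(\lambda_s+\lambda_t)\sum P^s_{mnk}-(\lambda_r+\lambda_t)\sum P^r_{mnk}]+\lambda_sP_s+\lambda_rP_r+\lambda_tP_t$, the max over $\tilde\phi_{mnk}\in[0,1]$ with $\sum_{n,k}\tilde\phi_{mnk}=1\ \forall m$, $\sum_{m,k}\tilde\phi_{mnk}=1\ \forall n$ and $P^s,P^r\ge0$. Per-$\lambda$ procedure: $\alpha=2\ln2$, $[x]^+=\max\{x,0\}$, $p_2=([\frac{w_k}{\alpha(\lambda_s+\lambda_t)}-\frac1{c_{mk}}]^+,0)$,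 (for $b_{nk}>0$) $p_1=(1,\frac{a_m-c_{mk}}{b_{nk}})[\frac{w_kb_{nk}}{\alpha(b_{nk}(\lambda_s+\lambda_t)+(a_m-c_{mk})(\lambda_r+\lambda_t))}-\frac1{a_m}]^+$; $L_{mnk}(p^s,p^r,\lambda)=w_kR_{mnk}(p^s,p^r)-(\lambda_s+\lambda_t)p^s-(\lambda_r+\lambda_t)p^r$; $(p^s_{mnk}(\lambda),p^r_{mnk}(\lambda))$ equals $([\frac{w_k}{\alpha(\lambda_s+\lambda_t)}-\frac1{a_m}]^+,0)$ if $a_m\le c_{mk}$, $p_1$ if $a_m>c_{mk}$ and $\frac{c_{mk}}{\lambda_s+\lambda_t}<\frac{b_{nk}}{\lambda_r+\lambda_t}$, otherwise whichever of $p_1,p_2$ gives larger $L_{mnk}$. $A_{mnk}(\lambda)=L_{mnk}(p^s_{mnk}(\lambda),p^r_{mnk}(\lambda),\lambda)$; $k^*(m,n)\in\arg\max_kA_{mnk}(\lambda)$; $X^*$ an $N\times N$ permutation matrix maximizing $\sum x_{mn}A_{mnk^*(m,n)}(\lambda)$; $\phi^*_{mnk}(\lambda)=x^*_{mn}\mathbf 1[k=k^*(m,n)]$, $P^{s*}_{mnk}(\lambda)=\phi^*_{mnk}(\lambda)p^s_{mnk}(\lambda)$, $P^{r*}_{mnk}(\lambda)=\phi^*_{mnk}(\lambda)p^r_{mnk}(\lambda)$. Subgradient: $\theta(\lambda)=(P_s,P_r,P_t)-\sum_{m,n,k}(P^{s*}_{mnk}(\lambda),P^{r*}_{mnk}(\lambda),P^{s*}_{mnk}(\lambda)+P^{r*}_{mnk}(\lambda))$.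 Regions: $\mathcal R_1=\{\lambda\succeq0:\lambda_s+\lambda_t\ge\frac{\min_{\{k:w_k>0\}}w_k\min\{\min_{\{m:a_m>0\}}a_m,\min_{\{m,k:c_{mk}>0\}}c_{mk}\}}{4\alpha(\max_ma_m\min\{P_s,P_t\}+1)}\}$, $\mathcal R_2=\{\lambda\succeq0:\lambda_s+\lambda_t+\frac{\min_{\{m:a_m>0\}}a_m}{\max_{n,k}b_{nk}}(\lambda_r+\lambda_t)\ge\frac{\min_{\{k:w_k>0\}}w_k}{\alpha(\min\{P_s,P_t\}+1/\min_{\{m:a_m>0\}}a_m)}\}$. Projected subgradient updating onto a convex region $\mathcal R$: start from $\lambda^{(0)}\in\mathcal R$ and iterate $\lambda^{(l+1)}=\Pi_{\mathcal R}(\lambda^{(l)}-\nu^{(l)}\theta(\lambda^{(l)}))$, $\Pi_{\mathcal R}$ the Euclidean projection, $\nu^{(l)}>0$. DCDM algorithm: if some $c_{mk}>0$: run projected subgradient updating onto $\mathcal R_1$ (output $\lambda_1^*$); then set all $c_{mk}=0$ and run projected subgradient updating onto $\mathcal R_2$ with these modified gains (output $\lambda_2^*$); return $\arg\min_{\lambda\in\{\lambda_1^*,\lambda_2^*\}}g(\lambda)$. Otherwise, run projected subgradient updating onto $\mathcal R_2$ and return its output. *)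

(* Defs.v *)
From HB Require Import structures.
From mathcomp Require Import all_boot all_order all_algebra all_fingroup.
From mathcomp Require Import all_classical all_reals all_analysis.
Set Implicit Arguments. Unset Strict Implicit. Unset Printing Implicit Defensive.
Import Order.TTheory GRing.Theory Num.Theory.
Local Open Scope ring_scope.

Section Relay.
Variable R : realType.

(* triples (lambda_s, lambda_r, lambda_t) and subgradients (s, r, t) *)
Record triple := Triple { ts : R; tr : R; tt : R }.

Definition tsub (x y : triple) : triple :=
  Triple (ts x - ts y) (tr x - tr y) (tt x - tt y).
Definition tscale (nu : R) (x : triple) : triple :=
  Triple (nu * ts x) (nu * tr x) (nu * tt x).
Definition dist2 (x y : triple) : R :=
  (ts x - ts y) ^+ 2 + (tr x - tr y) ^+ 2 + (tt x - tt y) ^+ 2.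
Definition norm3 (x : triple) : R :=
  Num.sqrt (ts x ^+ 2 + tr x ^+ 2 + tt x ^+ 2).
Definition tnonneg (x : triple) : Prop := 0 <= ts x /\ 0 <= tr x /\ 0 <= tt x.

Definition alpha : R := 2 * ln 2.
Definition log2 (x : R) : R := ln x / ln 2.
Definition posp (x : R) : R := Num.max x 0.

(* minimum of the positive values of f (meaningful when some value is > 0):
   the default element is >= every value, so it never changes the result *)
Definition maxof (T : finType) (f : T -> R) : R := \big[Num.max/0]_(i : T) f i.
Definition minpos (T : finType) (f : T -> R) : R :=
  \big[Num.min/maxof f]_(i : T | 0 < f i) f i.

Definition rate (am cmk bnk ps pr : R) : R :=
  2^-1 * Num.min (log2 (1 + am * ps)) (log2 (1 + cmk * ps + bnk * pr)).

(* L_{mnk}; ls = lambda_s + lambda_t, lr = lambda_r + lambda_t *)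
Definition Lag (wk am cmk bnk ls lr : R) (p : R * R) : R :=
  wk * rate am cmk bnk p.1 p.2 - ls * p.1 - lr * p.2.

(* [x - 1/g]^+ with the convention 1/0 = +infinity (value 0 when g = 0) *)
Definition wfill (x g : R) : R := if 0 < g then posp (x - g^-1) else 0.

Definition pw2 (wk cmk ls : R) : R * R := (wfill (wk / (alpha * ls)) cmk, 0).
Definition pw1 (wk am cmk bnk ls lr : R) : R * R :=
  let s := posp (wk * bnk / (alpha * (bnk * ls + (am - cmk) * lr)) - am^-1) in
  (s, (am - cmk) / bnk * s).

(* (p^s_{mnk}(lambda), p^r_{mnk}(lambda)) : the per-lambda procedure, as a
   relation (ties in "whichever gives larger L" may be broken either way).
   The test c/(ls) < b/(lr) is written as c*lr < b*ls (ls, lr >= 0). *)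
Definition pchoice (wk am cmk bnk ls lr : R) (p : R * R) : Prop :=
  if am <= cmk then p = (wfill (wk / (alpha * ls)) am, 0)
  else if cmk * lr < bnk * ls then p = pw1 wk am cmk bnk ls lr
  else if bnk == 0 then p = pw2 wk cmk ls
  else (p = pw1 wk am cmk bnk ls lr /\
          Lag wk am cmk bnk ls lr (pw2 wk cmk ls)
            <= Lag wk am cmk bnk ls lr (pw1 wk am cmk bnk ls lr))
    \/ (p = pw2 wk cmk ls /\
          Lag wk am cmk bnk ls lr (pw1 wk am cmk bnk ls lr)
            <= Lag wk am cmk bnk ls lr (pw2 wk cmk ls)).

(* The permutation matrix X* is
   x_{mn} = [sigma m = n] for a permutation sigma. *)
Definition subgrad (N K : nat) (w : 'I_K -> R) (a : 'I_N -> R)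
    (b c : 'I_N -> 'I_K -> R) (Ps Pr Pt : R) (lam theta : triple) : Prop :=
  let ls := ts lam + tt lam in
  let lr := tr lam + tt lam in
  exists (p : 'I_N -> 'I_N -> 'I_K -> R * R) (kstar : 'I_N -> 'I_N -> 'I_K)
         (sigma : 'S_N),
    let A m n k := Lag (w k) (a m) (c m k) (b n k) ls lr (p m n k) in
    let x (s : 'S_N) (m n : 'I_N) : R := ((s m == n) : bool)%:R in
    let phi m n k : R := x sigma m n * ((k == kstar m n) : bool)%:R in
    (forall m n k, pchoice (w k) (a m) (c m k) (b n k) ls lr (p m n k)) /\
    (forall m n k, A m n k <= A m n (kstar m n)) /\
    (forall s : 'S_N, \sum_m \sum_n x s m n * A m n (kstar m n)
                      <= \sum_m \sum_n x sigma m n * A m n (kstar m n)) /\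
    theta = Triple
      (Ps - \sum_m \sum_n \sum_k phi m n k * (p m n k).1)
      (Pr - \sum_m \sum_n \sum_k phi m n k * (p m n k).2)
      (Pt - \sum_m \sum_n \sum_k phi m n k * ((p m n k).1 + (p m n k).2)).

Definition region1 (N K : nat) (w : 'I_K -> R) (a : 'I_N -> R)
    (c : 'I_N -> 'I_K -> R) (Ps Pt : R) (lam : triple) : Prop :=
  tnonneg lam /\
  minpos w * Num.min (minpos a) (minpos (fun mk : 'I_N * 'I_K => c mk.1 mk.2))
    / (4 * alpha * (maxof a * Num.min Ps Pt + 1)) <= ts lam + tt lam.

Definition region2 (N K : nat) (w : 'I_K -> R) (a : 'I_N -> R)
    (b : 'I_N -> 'I_K -> R) (Ps Pt : R) (lam : triple) : Prop :=
  tnonneg lam /\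
  minpos w / (alpha * (Num.min Ps Pt + (minpos a)^-1))
    <= ts lam + tt lam
       + minpos a / maxof (fun nk : 'I_N * 'I_K => b nk.1 nk.2) * (tr lam + tt lam).

Definition is_proj (Rg : triple -> Prop) (x y : triple) : Prop :=
  Rg y /\ forall z, Rg z -> dist2 x y <= dist2 x z.

Definition psg_run (Rg : triple -> Prop) (sg : triple -> triple -> Prop)
    (lam th : nat -> triple) : Prop :=
  Rg (lam 0%N) /\
  forall l : nat, sg (lam l) (th l) /\
    exists nu : R, 0 < nu /\ is_proj Rg (tsub (lam l) (tscale nu (th l))) (lam l.+1).

Definition gain_ok (glo ghi g : R) : Prop := g = 0 \/ (glo <= g /\ g <= ghi).

End Relay.

(* Main.v *)
Require Import Defs.
From HB Require Import structures.
From mathcomp Require Import all_boot all_order all_algebra all_fingroup.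
From mathcomp Require Import all_classical all_reals all_analysis.
From mathcomp Require Import ring lra.
Import Order.TTheory GRing.Theory Num.Theory.
Local Open Scope ring_scope.

Section H.
Variable R : realType.

Lemma divle (x' x y y' : R) : 0 <= x' -> x' <= x -> 0 < y -> y <= y' -> x'/y' <= x/y.
Proof.
move=> h0 h1 h2 h3.
have y'p : 0 < y' by apply: lt_le_trans h3.
apply: (@le_trans _ _ (x' / y)).
  apply: ler_wpM2l => //.
  by rewrite lef_pV2 ?posrE.
apply: ler_wpM2r => //; by rewrite invr_ge0 ltW.
Qed.

Lemma maxof_ge (T : finType) (f : T -> R) i : f i <= maxof f.
Proof.
rewrite /maxof.
have : i \in index_enum T by rewrite mem_index_enum.
elim: (index_enum T) => [//|x s IH]; rewrite inE big_cons => /orP[/eqP->|/IH h].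
  by rewrite le_max lexx.
by rewrite le_max h orbT.
Qed.

Lemma maxof_le (T : finType) (f : T -> R) hi : 0 <= hi -> (forall i, f i <= hi) -> maxof f <= hi.
Proof.
move=> h0 h; rewrite /maxof; apply: (big_ind (fun x => x <= hi)) => //.
by move=> x y hx hy; rewrite ge_max hx hy.
Qed.

Lemma minpos_le {T : finType} {f : T -> R} {i} : 0 < f i -> minpos f <= f i.
Proof.
move=> hi; rewrite /minpos.
have : i \in index_enum T by rewrite mem_index_enum.
elim: (index_enum T) => [//|x s IH]; rewrite inE big_cons => /orP[/eqP E|/IH h].
  subst x; by rewrite hi ge_min lexx.
by case: ifP => _ //; rewrite ge_min h orbT.
Qed.

Lemma minpos_ge (T : finType) (f : T -> R) (P : R -> Prop) :
  P (maxof f) -> (forall x y, P x -> P y -> P (Num.min x y)) ->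
  (forall i, 0 < f i -> P (f i)) -> P (minpos f).
Proof. by move=> h1 h2 h3; rewrite /minpos; apply: big_ind. Qed.


Lemma alpha_gt0 : 0 < alpha R.
Proof. rewrite /alpha mulr_gt0 // ln_gt0 //; lra. Qed.

Lemma wfill_bd (g x : R) : 0 <= x -> 0 <= wfill x g <= x.
Proof.
move=> hx; rewrite /wfill; case: ifP => hg; last by rewrite lexx hx.
rewrite /posp le_max lexx orbT /= ge_max hx andbT.
have : 0 <= g^-1 by rewrite invr_ge0 ltW.
lra.
Qed.

Lemma wfill0 (x : R) : wfill x 0 = 0.
Proof. by rewrite /wfill ltxx. Qed.

Lemma gain_pos {glo ghi} {g : R} : gain_ok glo ghi g -> 0 < glo -> 0 < g -> glo <= g <= ghi.
Proof. by move=> [->|[h1 h2]] hg //; rewrite ?h1 ?h2 //; move: hg; rewrite ltxx. Qed.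

Lemma gain_ge0 {glo ghi} {g : R} : gain_ok glo ghi g -> 0 < glo -> glo <= ghi ->
  0 <= g <= ghi /\ (g = 0 \/ glo <= g).
Proof.
move=> [->|[h1 h2]] hg hgg.
  split; last by left.
  rewrite lexx /=; lra.
split; last by right.
apply/andP; split; lra.
Qed.

Lemma wfill_case (dl wk ls g : R) : 0 < dl -> 0 <= wk <= 1 -> 0 <= ls ->
  (g = 0 \/ dl <= ls) -> 0 <= wfill (wk / (alpha R * ls)) g <= 1 / (alpha R * dl).
Proof.
move=> hdl /andP[w0 w1] hls [->|hd].
  by rewrite wfill0 lexx /= divr_ge0 // ltW // mulr_gt0 // alpha_gt0.
have ha := alpha_gt0.
have hx : 0 <= wk / (alpha R * ls) by rewrite divr_ge0 // mulr_ge0 // ltW.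
have /andP[h1 h2] := wfill_bd g _ hx.
apply/andP; split => //; apply: le_trans h2 _.
apply: divle => //; first by rewrite mulr_gt0.
by rewrite ler_wpM2l // ltW.
Qed.

Definition Sb (glo ghi dl : R) := ghi / (alpha R * (glo * dl)).

Lemma pw1_bd (glo ghi dl wk am cmk bnk ls lr : R) :
  0 < glo -> glo <= ghi -> 0 < dl -> 0 <= wk <= 1 ->
  glo <= bnk <= ghi -> cmk < am -> am <= ghi -> 0 <= cmk -> 0 <= ls -> 0 <= lr ->
  (dl <= ls \/ (cmk = 0 /\ glo <= am /\ dl <= ls + lr)) ->
  0 <= (pw1 wk am cmk bnk ls lr).1 <= Sb glo ghi dl /\
  0 <= (pw1 wk am cmk bnk ls lr).2 <= ghi / glo * Sb glo ghi dl.
Proof.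
move=> g0 g1 hdl /andP[w0 w1] /andP[b0 b1] hca ha1 hc0 hls hlr hC.
have ha := alpha_gt0.
have den : glo * dl <= bnk * ls + (am - cmk) * lr.
  case: hC => [h|[-> [h1 h2]]]; nra.
have S0 : 0 <= Sb glo ghi dl.
  rewrite /Sb; apply: divr_ge0; [lra | by apply/ltW; rewrite mulr_gt0 // mulr_gt0].
have hs : 0 <= (pw1 wk am cmk bnk ls lr).1 <= Sb glo ghi dl.
  rewrite /pw1 /= /posp le_max lexx orbT /= ge_max S0 andbT.
  have ai : 0 <= am^-1 by rewrite invr_ge0; lra.
  suff : wk * bnk / (alpha R * (bnk * ls + (am - cmk) * lr)) <= Sb glo ghi dl by lra.
  apply: divle.
  - rewrite mulr_ge0 //; lra.
  - nra.
  - by rewrite mulr_gt0 // mulr_gt0.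
  - by rewrite ler_wpM2l // ltW.
split => //.
move: hs => /andP[s0 s1].
rewrite /pw1 /= -/(pw1 wk am cmk bnk ls lr).
have q0 : 0 <= (am - cmk) / bnk by rewrite divr_ge0; lra.
have q1 : (am - cmk) / bnk <= ghi / glo by apply: divle => //; lra.
rewrite mulr_ge0 //=.
apply: (le_trans (ler_wpM2r _ q1)) => //.
by rewrite ler_wpM2l // divr_ge0 // ltW // (lt_le_trans g0).
Qed.


Definition Mb (glo ghi dl : R) := 1 / (alpha R * dl) + Sb glo ghi dl + ghi / glo * Sb glo ghi dl.

Lemma Mb_ge0 (glo ghi dl : R) : 0 < glo -> glo <= ghi -> 0 < dl -> 0 <= Mb glo ghi dl.
Proof.
move=> g0 g1 hdl.
have ha := alpha_gt0.
have A0 : 0 <= 1 / (alpha R * dl) by rewrite divr_ge0 // ltW // mulr_gt0.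
have S0 : 0 <= Sb glo ghi dl.
  rewrite /Sb; apply: divr_ge0; [lra | by apply/ltW; rewrite mulr_gt0 // mulr_gt0].
have T0 : 0 <= ghi / glo * Sb glo ghi dl by rewrite mulr_ge0 // divr_ge0; lra.
rewrite /Mb; lra.
Qed.

Lemma entry_bd (glo ghi dl wk am cmk bnk ls lr : R) (p : R * R) :
  0 < glo -> glo <= ghi -> 0 < dl -> 0 <= wk <= 1 ->
  gain_ok glo ghi am -> gain_ok glo ghi bnk -> gain_ok glo ghi cmk ->
  0 <= ls -> 0 <= lr -> (dl <= ls \/ (cmk = 0 /\ dl <= ls + lr)) ->
  pchoice wk am cmk bnk ls lr p ->
  0 <= p.1 <= Mb glo ghi dl /\ 0 <= p.2 <= Mb glo ghi dl.
Proof.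
move=> g0 g1 hdl hw ga gb gc hls hlr hC.
have ha := alpha_gt0.
have A0 : 0 <= 1 / (alpha R * dl) by rewrite divr_ge0 // ltW // mulr_gt0.
have S0 : 0 <= Sb glo ghi dl.
  rewrite /Sb; apply: divr_ge0; [lra | by apply/ltW; rewrite mulr_gt0 // mulr_gt0].
have T0 : 0 <= ghi / glo * Sb glo ghi dl by rewrite mulr_ge0 // divr_ge0; lra.
have [/andP[a0 a1] aC] := gain_ge0 ga g0 g1.
have [/andP[b0 b1] bC] := gain_ge0 gb g0 g1.
have [/andP[c0 c1] cC] := gain_ge0 gc g0 g1.
have hpw2 : 0 <= (pw2 wk cmk ls).1 <= Mb glo ghi dl /\ 0 <= (pw2 wk cmk ls).2 <= Mb glo ghi dl.
  rewrite /pw2 /= lexx /=; split; last by rewrite /Mb; lra.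
  have /andP[h1 h2] : 0 <= wfill (wk / (alpha R * ls)) cmk <= 1 / (alpha R * dl).
    apply: wfill_case => //; case: hC => [h|[h _]]; [by right | by left].
  rewrite h1 /=; rewrite /Mb; lra.
have hpw1 : cmk < am -> glo <= bnk ->
    0 <= (pw1 wk am cmk bnk ls lr).1 <= Mb glo ghi dl /\
    0 <= (pw1 wk am cmk bnk ls lr).2 <= Mb glo ghi dl.
  move=> hca hb.
  have [/andP[s0 s1] /andP[r0 r1]] : 0 <= (pw1 wk am cmk bnk ls lr).1 <= Sb glo ghi dl /\
    0 <= (pw1 wk am cmk bnk ls lr).2 <= ghi / glo * Sb glo ghi dl.
    apply: pw1_bd => //; first by rewrite hb.
    case: hC => [h|[h1 h2]]; first by left.
    right; split => //; split => //.
    by case: aC => // e; move: hca; rewrite e h1 ltxx.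
  by split; apply/andP; split => //; rewrite /Mb; lra.
rewrite /pchoice; case: ifP => h1.
  move=> ->; rewrite /= lexx /=; split; last by rewrite /Mb; lra.
  have /andP[e1 e2] : 0 <= wfill (wk / (alpha R * ls)) am <= 1 / (alpha R * dl).
    apply: wfill_case => //; case: hC => [h|[h _]]; first by right.
    by left; move: h1; rewrite h => h1; apply/eqP; rewrite eq_le h1 a0.
  by apply/andP; split => //; rewrite /Mb; lra.
have hca : cmk < am by rewrite ltNge h1.
case: ifP => h2.
  move=> ->; apply: hpw1 => //.
  case: bC => // e; move: h2; rewrite e mul0r => h2.
  have : 0 <= cmk * lr by rewrite mulr_ge0.
  lra.
case: ifP => h3; first by move=> ->.
have hb : glo <= bnk by case: bC => // e; move: h3; rewrite e eqxx.
by case=> [[-> _]|[-> _]] //; apply: hpw1.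
Qed.


Lemma sum3_bd (N K : nat) (F : 'I_N -> 'I_N -> 'I_K -> R) (M : R) :
  (forall m n k, 0 <= F m n k <= M) ->
  0 <= \sum_m \sum_n \sum_k F m n k <= N%:R ^+ 2 * K%:R * M.
Proof.
move=> hF; apply/andP; split.
  apply: sumr_ge0 => m _; apply: sumr_ge0 => n _; apply: sumr_ge0 => k _.
  by have /andP[] := hF m n k.
apply: (@le_trans _ _ (\sum_(m < N) \sum_(n < N) \sum_(k < K) M)).
  apply: ler_sum => m _; apply: ler_sum => n _; apply: ler_sum => k _.
  by have /andP[] := hF m n k.
rewrite !sumr_const !card_ord -!mulrnA -(mulr_natr M) !natrM; rewrite le_eqVlt; apply/orP; left; apply/eqP; ring.
Qed.

Lemma sq_bd (x X : R) : -X <= x <= X -> x ^+ 2 <= X ^+ 2.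
Proof.
move=> /andP[h1 h2].
have : 0 <= (X - x) * (X + x) by apply: mulr_ge0; lra.
have -> : (X - x) * (X + x) = X ^+ 2 - x ^+ 2 by ring.
by rewrite subr_ge0.
Qed.

Lemma norm_bd (Ps Pr Pt S1 S2 S3 T nn : R) :
  0 < Ps -> 0 < Pr -> 0 < Pt -> 1 <= nn -> 0 <= T ->
  0 <= S1 <= T -> 0 <= S2 <= T -> 0 <= S3 <= 2 * T ->
  norm3 (Triple (Ps - S1) (Pr - S2) (Pt - S3)) <= (Ps + Pr + Pt) * nn + 4 * T.
Proof.
move=> p1 p2 p3 hn hT /andP[s1 s1'] /andP[s2 s2'] /andP[s3 s3'].
have a1 : Ps <= Ps * nn by rewrite ler_peMr // ltW.
have a2 : Pr <= Pr * nn by rewrite ler_peMr // ltW.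
have a3 : Pt <= Pt * nn by rewrite ler_peMr // ltW.
set X := Ps * nn + T; set Y := Pr * nn + T; set Z := Pt * nn + 2 * T.
have -> : (Ps + Pr + Pt) * nn + 4 * T = X + Y + Z by rewrite /X /Y /Z; ring.
have X0 : 0 <= X by rewrite /X; lra.
have Y0 : 0 <= Y by rewrite /Y; lra.
have Z0 : 0 <= Z by rewrite /Z; lra.
have u0 : 0 <= X + Y + Z by lra.
rewrite /norm3 /= -(ger0_norm u0) -sqrtr_sqr ler_sqrt; last by rewrite sqr_ge0.
have hx : (Ps - S1) ^+ 2 <= X ^+ 2 by apply: sq_bd; apply/andP; split; rewrite /X; lra.
have hy : (Pr - S2) ^+ 2 <= Y ^+ 2 by apply: sq_bd; apply/andP; split; rewrite /Y; lra.
have hz : (Pt - S3) ^+ 2 <= Z ^+ 2 by apply: sq_bd; apply/andP; split; rewrite /Z; lra.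
have -> : (X + Y + Z) ^+ 2 = X ^+ 2 + Y ^+ 2 + Z ^+ 2 + 2 * (X * Y + X * Z + Y * Z) by ring.
have : 0 <= X * Y by rewrite mulr_ge0.
have : 0 <= X * Z by rewrite mulr_ge0.
have : 0 <= Y * Z by rewrite mulr_ge0.
lra.
Qed.


Lemma gen_bd (T : finType) (f : T -> R) glo ghi : 0 < glo -> glo <= ghi ->
  (forall i, gain_ok glo ghi (f i)) -> (exists i, 0 < f i) ->
  (glo <= minpos f <= ghi) /\ (glo <= maxof f <= ghi).
Proof.
move=> g0 g1 hg [i0 hi0].
have /andP[f1 f2] := gain_pos (hg i0) g0 hi0.
have mx : glo <= maxof f <= ghi.
  apply/andP; split; first by apply: le_trans f1 (maxof_ge _ f i0).
  apply: maxof_le; first lra.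
  by move=> i; have [/andP[] _] := gain_ge0 (hg i) g0 g1.
split => //; apply/andP; split; last by apply: le_trans (minpos_le hi0) f2.
apply: (minpos_ge _ _ (fun x => glo <= x)); first by case/andP: mx.
  by move=> x y hx hy; rewrite le_min hx hy.
by move=> i hi; have /andP[] := gain_pos (hg i) g0 hi.
Qed.

Lemma phi01 (b1 b2 : bool) : 0 <= (b1%:R * b2%:R : R) <= 1.
Proof. by case: b1; case: b2; rewrite ?mul0r ?mul1r ?lexx ?ler01. Qed.

Lemma phix (f x B : R) : 0 <= f <= 1 -> 0 <= x <= B -> 0 <= f * x <= B.
Proof.
move=> /andP[f1 f2] /andP[x1 x2]; rewrite mulr_ge0 //=.
apply: le_trans x2; apply: le_trans (ler_wpM2r x1 f2) _; by rewrite mul1r.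
Qed.

Lemma sub_bd (N K : nat) (w : 'I_K -> R) (a : 'I_N -> R) (b c : 'I_N -> 'I_K -> R) (Ps Pr Pt glo ghi dl : R) lam th :
  0 < glo -> glo <= ghi -> 0 < dl -> (forall k, 0 <= w k <= 1) ->
  (forall m, gain_ok glo ghi (a m)) ->
  (forall n k, gain_ok glo ghi (b n k)) ->
  (forall m k, gain_ok glo ghi (c m k)) ->
  (0 < N)%N -> 0 < Ps -> 0 < Pr -> 0 < Pt -> tnonneg lam ->
  (forall m k, dl <= ts lam + tt lam \/
     (c m k = 0 /\ dl <= ts lam + tt lam + (tr lam + tt lam))) ->
  subgrad w a b c Ps Pr Pt lam th ->
  norm3 th <= (Ps + Pr + Pt + 4 * K%:R * Mb glo ghi dl) * N%:R ^+ 2.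
Proof.
move=> g0 g1 hdl hw ga gb gc hN p1 p2 p3 [l1 [l2 l3]] hC.
case=> p [kstar [sigma [Hp [_ [_ ->]]]]].
set M := Mb glo ghi dl.
have hE : forall m n k, 0 <= (p m n k).1 <= M /\ 0 <= (p m n k).2 <= M.
  move=> m n k; apply: (@entry_bd glo ghi dl (w k) (a m) (c m k) (b n k) (ts lam + tt lam) (tr lam + tt lam) _ g0 g1 hdl (hw k) (ga m) (gb n k) (gc m k) _ _ (hC m k) (Hp m n k)); by rewrite addr_ge0.
have M0 : 0 <= M by apply: Mb_ge0.
have hN1 : 1 <= N%:R :> R by rewrite ler1n.
have hn : 1 <= N%:R ^+ 2 :> R by rewrite expr2; nra.
set T := N%:R ^+ 2 * K%:R * M.
have -> : (Ps + Pr + Pt + 4 * K%:R * M) * N%:R ^+ 2 = (Ps + Pr + Pt) * N%:R ^+ 2 + 4 * T.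
  by rewrite /T; ring.
have T0 : 0 <= T by rewrite /T !mulr_ge0 // ?exprn_ge0 ?ler0n.
apply: norm_bd => //.
- apply: sum3_bd => m n k; apply: phix; first exact: phi01.
  by have [] := hE m n k.
- apply: sum3_bd => m n k; apply: phix; first exact: phi01.
  by have [] := hE m n k.
- have : 0 <= \sum_m \sum_n \sum_k
      (sigma m == n)%:R * (k == kstar m n)%:R * ((p m n k).1 + (p m n k).2)
      <= N%:R ^+ 2 * K%:R * (2 * M).
    apply: sum3_bd => m n k; apply: phix; first exact: phi01.
    have [/andP[e1 e2] /andP[e3 e4]] := hE m n k.
    apply/andP; split; lra.
  have -> : N%:R ^+ 2 * K%:R * (2 * M) = 2 * T :> R by rewrite /T; ring.
  by [].
Qed.

End H.

Lemma run_all (R : realType) (Rg : triple R -> Prop) sg lam th :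
  psg_run Rg sg lam th -> forall l, Rg (lam l) /\ sg (lam l) (th l).
Proof.
case=> h0 h l; split; last by case: (h l).
case: l => [//|l]; have [_ [nu [_ [hr _]]]] := h l; exact: hr.
Qed.

Theorem lemma4 (R : realType) (K : nat) (w : 'I_K -> R) (Ps Pr Pt glo ghi : R) :
  (forall k, 0 <= w k) -> \sum_k w k = 1 ->
  0 < Ps -> 0 < Pr -> 0 < Pt -> 0 < glo -> glo <= ghi ->
  exists thmax : R,
  forall (N : nat) (a : 'I_N -> R) (b c : 'I_N -> 'I_K -> R),
    (forall m, gain_ok glo ghi (a m)) ->
    (forall n k, gain_ok glo ghi (b n k)) ->
    (forall m k, gain_ok glo ghi (c m k)) ->
    (exists m, 0 < a m) -> (exists n k, 0 < b n k) ->
    ((exists m k, 0 < c m k) ->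
       forall lam th : nat -> triple R,
         psg_run (region1 w a c Ps Pt) (subgrad w a b c Ps Pr Pt) lam th ->
         forall l, norm3 (th l) <= thmax * (N%:R) ^+ 2) /\
    (forall lam th : nat -> triple R,
       psg_run (region2 w a b Ps Pt) (subgrad w a b (fun _ _ => 0) Ps Pr Pt) lam th ->
       forall l, norm3 (th l) <= thmax * (N%:R) ^+ 2).
Proof.
move=> w0 wsum p1 p2 p3 g0 g1.
have hw : forall k, 0 <= w k <= 1.
  move=> k; rewrite w0 /= -wsum (bigD1 k) //= lerDl.
  by apply: sumr_ge0 => i _.
have [k0 hk0] : exists k, 0 < w k.
  case: (pselect (exists k, 0 < w k)) => // h; exfalso.
  have : \sum_k w k <= 0.
    apply: sumr_le0 => k _; rewrite leNgt; apply/negP => hk; apply: h; by exists k.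
  rewrite wsum; lra.
set mw := minpos w.
have mw0 : 0 < mw.
  rewrite /mw; apply: (@minpos_ge R _ w (fun x : R => 0 < x)).
  - exact: lt_le_trans hk0 (@maxof_ge R _ w k0).
  - by move=> x y hx hy; rewrite lt_min hx hy.
  - by [].
set mP := Num.min Ps Pt.
have mP0 : 0 < mP by rewrite lt_min p1 p3.
have ha := @alpha_gt0 R.
set L1c := mw * glo / (4 * alpha R * (ghi * mP + 1)).
set L2c := mw / (alpha R * (mP + glo^-1)).
set G := 1 + ghi / glo.
have r0 : 0 <= ghi / glo by rewrite divr_ge0; lra.
have G0 : 0 < G by rewrite /G; lra.
have L1c0 : 0 < L1c.
  have gm : 0 <= ghi * mP by rewrite mulr_ge0 //; lra.
  have d0 : 0 < ghi * mP + 1 by lra.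
  rewrite /L1c divr_gt0 //; first by rewrite mulr_gt0.
  by apply: mulr_gt0 => //; apply: mulr_gt0.
have L2c0 : 0 < L2c.
  rewrite /L2c divr_gt0 //; apply: mulr_gt0 => //; by rewrite addr_gt0 // invr_gt0.
set dl := Num.min L1c (L2c / G).
have dl0 : 0 < dl by rewrite lt_min L1c0 divr_gt0.
have dl1 : dl <= L1c by rewrite /dl ge_min lexx.
have dl2 : dl <= L2c / G by rewrite /dl ge_min lexx orbT.
exists (Ps + Pr + Pt + 4 * K%:R * Mb R glo ghi dl).
move=> N a b c ga gb gc [m0 am0] [n0 [k1 bn0]].
have hN : (0 < N)%N by exact: (leq_ltn_trans (leq0n _) (ltn_ord m0)).
have [/andP[ma1 ma2] /andP[Ma1 Ma2]] := @gen_bd R _ a _ _ g0 g1 ga (ex_intro _ m0 am0).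
have [_ /andP[Mb1 Mb2]] := @gen_bd R _ (fun nk : 'I_N * 'I_K => b nk.1 nk.2) _ _ g0 g1
  (fun nk => gb nk.1 nk.2) (ex_intro _ (n0, k1) bn0).
split.
  move=> [mc [kc cpos]] lam th hrun l.
  have [[hnn hL] hsg] := run_all _ _ _ _ _ hrun l.
  have [/andP[mc1 mc2] _] := @gen_bd R _ (fun mk : 'I_N * 'I_K => c mk.1 mk.2) _ _ g0 g1
    (fun mk => gc mk.1 mk.2) (ex_intro _ (mc, kc) cpos).
  apply: (@sub_bd R N K w a b _ Ps Pr Pt glo ghi dl (lam l) (th l) g0 g1 dl0 hw ga gb gc hN p1 p2 p3 hnn _ hsg) => m k; left.
  apply: le_trans hL; apply: le_trans dl1 _.
  rewrite /L1c -/mP; apply: divle.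
  - by rewrite mulr_ge0 // ltW.
  - apply: ler_wpM2l; first exact: ltW.
    by rewrite le_min ma1 mc1.
  - apply: mulr_gt0; first by apply: mulr_gt0.
    have : 0 <= maxof a * mP by rewrite mulr_ge0 //; lra.
    lra.
  - apply: ler_wpM2l; first by apply/ltW/mulr_gt0.
    rewrite lerD2r; apply: ler_wpM2r => //; lra.
move=> lam th hrun l.
have [[hnn hL] hsg] := run_all _ _ _ _ _ hrun l.
apply: (@sub_bd R N K w a b _ Ps Pr Pt glo ghi dl (lam l) (th l) g0 g1 dl0 hw ga gb _ hN p1 p2 p3 hnn _ hsg).
  by move=> m k; left.
move=> m k; right; split => //.
case: hnn => s0 [r1 t0].
rewrite -/mP -/mw in hL.
set ls := ts (lam l) + tt (lam l); set lr := tr (lam l) + tt (lam l).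
have ls0 : 0 <= ls by rewrite addr_ge0.
have lr0 : 0 <= lr by rewrite addr_ge0.
set q := minpos a / maxof (fun nk : 'I_N * 'I_K => b nk.1 nk.2).
have q1 : q <= ghi / glo by apply: divle => //; lra.
have h2 : L2c <= ls + q * lr.
  apply: le_trans hL; rewrite /L2c; apply: divle => //; first lra.
    by rewrite mulr_gt0 // addr_gt0 // invr_gt0; lra.
  apply: ler_wpM2l; first exact: ltW.
  rewrite lerD2l lef_pV2 ?posrE //; lra.
have h3 : q * lr <= ghi / glo * lr by rewrite ler_wpM2r.
have h4 : ls + ghi / glo * lr <= G * (ls + lr).
  have -> : G * (ls + lr) = ls + ghi / glo * lr + (ghi / glo * ls + lr) by rewrite /G; ring.
  by rewrite lerDl addr_ge0 // mulr_ge0.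
apply: le_trans dl2 _.
by rewrite ler_pdivrMr // mulrC; lra.
Qed.
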